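(* Let $g:\mathbb{R}^d\to\mathbb{C}$ be a function and let $A$ be a real invertible $d\times d$ matrix. Then: (i) If the series $\sum_{j=-\infty}^{\infty} g(A^j\gamma)$ converges for every $\gamma\in\mathbb{R}^d\setminus\{0\}$, then there exists a function $\varphi:\mathbb{R}^d\to\mathbb{C}$ such that $$g(\gamma)=\varphi(\gamma)-\varphi(A\gamma)\quad\text{for all }\gamma\in\mathbb{R}^d\setminus\{0\}. \qquad ( * )$$ (ii) Conversely, let $\varphi:\mathbb{R}^d\to\mathbb{C}$ be any function such that $( * )$ holds. Then for each fixed $\gamma\in\mathbb{R}^d\setminus\{0\}$, the series $\sum_{j=-\infty}^{\infty} g(A^j\gamma)$ converges if and only if both limits $\lim_{N\to\infty}\varphi(A^N\gamma)$ and $\lim_{N\to-\infty}\varphi(A^N\gamma)$ exist. (iii) Let $\varphi:\mathbb{R}^d\to\mathbb{C}$ be any function such that $( * )$ holds. Then $$\sum_{j=-\infty}^{\infty} g(A^j\gamma)=1\quad\text{for all }\gamma\in\mathbb{R}^d\setminus\{0\}$$ holds if and only if, for every $\gamma\in\mathbb{R}^d\setminus\{0\}$, both limits $\lim_{N\to\pm\infty}\varphi(A^N\gamma)$ exist and $$\lim_{N\to-\infty}\varphi(A^N\gamma)-\lim_{N\to\infty}\varphi(A^N\gamma)=1.$$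
   Context: Convergence of a bilateral series $\sum_{j=-\infty}^\infty a_j$ means that the partial sums $\sum_{j=-M}^{N} a_j$ converge as $M,N\to\infty$ (independently). *)

(* Defs.v *)
From HB Require Import structures.
From mathcomp Require Import all_boot all_order all_algebra.
From mathcomp Require Import all_classical all_reals all_analysis.
From mathcomp Require Import complex.
Import Order.TTheory GRing.Theory Num.Theory numFieldNormedType.Exports.
Set Implicit Arguments. Unset Strict Implicit. Unset Printing Implicit Defensive.
Local Open Scope classical_set_scope.
Local Open Scope ring_scope.

(* The complex numbers over the real field R, as a numClosedFieldType so that
   the (modulus-)norm topology of MathComp-Analysis applies. *)
Definition Cpx (R : realType) : numClosedFieldType := R[i].

(* A^j *m gamma for an integer exponent j (A^(-n) := (A^-1)^n, with invmx A the
   genuine inverse of A when A is invertible). *)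
Definition mxzact (R : realType) (d : nat) (A : 'M[R]_d) (j : int) (v : 'cV[R]_d)
  : 'cV[R]_d :=
  match j with
  | Posz n => iter n (mulmx A) v
  | Negz n => iter n.+1 (mulmx (invmx A)) v
  end.

Definition bpsum (T : zmodType) (a : int -> T) (M N : nat) : T :=
  \sum_(0 <= k < (M + N).+1) a (k%:Z - M%:Z).

(* The bilateral series \sum_{j in Z} a_j converges to l: the partial sums
   \sum_{j=-M}^{N} a_j tend to l as M, N -> oo independently. *)
Definition bseries_cvg_to (R : realType) (a : int -> Cpx R) (l : Cpx R) : Prop :=
  (fun MN : nat * nat => bpsum a MN.1 MN.2) @ filter_prod \oo \oo --> l.

Definition bseries_cvg (R : realType) (a : int -> Cpx R) : Prop :=
  exists l : Cpx R, bseries_cvg_to a l.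

(* Main.v *)
Set Warnings "-all".
Require Import Defs.
From HB Require Import structures.
From mathcomp Require Import all_boot all_order all_algebra.
From mathcomp Require Import all_classical all_reals all_analysis.
From mathcomp Require Import complex.
From mathcomp Require Import ring lra zify.
Import Order.TTheory GRing.Theory Num.Theory numFieldNormedType.Exports.
Local Open Scope classical_set_scope.
Local Open Scope ring_scope.

Section Top.
Variable R : realType.
Local Notation C := (Cpx R).

Lemma normC_ReIm (x y : R) : `|(x +i* y)%C : C| <= ((`|x| + `|y|)%:C)%C.
Proof.
rewrite normc_def /= lecE /= eqxx /=.
rewrite -(@ger0_norm _ (`|x| + `|y|)); last by rewrite addr_ge0.
rewrite -sqrtr_sqr ler_sqrt; last by rewrite sqr_ge0.
rewrite sqrrD -[x ^+ 2]real_normK ?num_real // -[y ^+ 2]real_normK ?num_real //.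
rewrite -subr_ge0 [X in 0 <= X](_ : _ = `|x| * `|y| *+ 2); last by ring.
by rewrite mulrn_wge0 // mulr_ge0.
Qed.
Lemma Re_sub (z w : C) : complex.Re (z - w) = complex.Re z - complex.Re w.
Proof. by case: z => a b; case: w => c d. Qed.
Lemma Im_sub (z w : C) : complex.Im (z - w) = complex.Im z - complex.Im w.
Proof. by case: z => a b; case: w => c d. Qed.

Lemma pos_C (e : C) : 0 < e -> e = ((complex.Re e)%:C)%C /\ 0 < complex.Re e.
Proof.
case: e => a b; rewrite ltcE /= => /andP[/eqP -> ha]; split => //.
Qed.

Lemma Re_lt (z : C) (e : R) : `|z| < (e%:C)%C -> `|complex.Re z| < e.
Proof.
move=> h; have := le_lt_trans (normc_ge_Re z) h. by rewrite ltcE /= => /andP[].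
Qed.

Lemma Im_lt (z : C) (e : R) : `|z| < (e%:C)%C -> `|complex.Im z| < e.
Proof.
case: z => a b; rewrite normc_def ltcE /= => /andP[_]; apply: le_lt_trans.
rewrite -sqrtr_sqr; apply: ler_wsqrtr; rewrite lerDr; exact: sqr_ge0.
Qed.
Lemma R_complete (w : nat -> R) :
  (forall e : R, 0 < e -> exists N0, forall N, (N0<=N)%N -> `|w N0 - w N| < e) -> cvgn w.
Proof.
move=> Hw; apply/cauchy_cvgP; apply: cauchy_exP => e e0.
have [N0 HN0] := Hw e e0; exists (w N0); exists N0 => // N /= hN.
Qed.

Lemma C_complete (v : nat -> C) :
  (forall e : R, 0 < e -> exists N0, forall N, (N0<=N)%N -> `|v N0 - v N| < (e%:C)%C) ->
  cvgn v.
Proof.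
move=> H.
pose w1 := fun N => complex.Re (v N). pose w2 := fun N => complex.Im (v N).
have c1 : cvgn w1.
  apply: R_complete => e e0; have [N0 HN0] := H e e0; exists N0 => N hN.
  rewrite /w1 -Re_sub; exact: Re_lt (HN0 N hN).
have c2 : cvgn w2.
  apply: R_complete => e e0; have [N0 HN0] := H e e0; exists N0 => N hN.
  rewrite /w2 -Im_sub; exact: Im_lt (HN0 N hN).
apply/cvg_ex; exists ((limn w1 +i* limn w2)%C : C).
apply/cvgrPdist_lt => eps /pos_C [-> ep].
move/cvgrPdist_lt: c1 => /(_ (complex.Re eps / 2)) c1.
move/cvgrPdist_lt: c2 => /(_ (complex.Re eps / 2)) c2.
near=> N.
have -> : ((limn w1 +i* limn w2)%C : C) - v N = ((limn w1 - w1 N) +i* (limn w2 - w2 N))%C.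
  by rewrite /w1 /w2; case: (v N).
apply: le_lt_trans (normC_ReIm _ _) _; rewrite ltcR (splitr (complex.Re eps)).
apply: ltrD; [near: N; apply: c1 | near: N; apply: c2]; by rewrite divr_gt0.
Unshelve. all: by end_near.
Qed.
Lemma addC_real (a b : R) : ((a%:C)%C + (b%:C)%C : C) = ((a+b)%:C)%C.
Proof. by apply/eqP; rewrite eq_complex /= addr0 !eqxx. Qed.

Lemma prod_eps (f : nat * nat -> C) l : f @ filter_prod \oo \oo --> l ->
  forall e : R, 0 < e -> exists M0 N0, forall M N, (M0<=M)%N -> (N0<=N)%N ->
    `|l - f (M,N)| < (e%:C)%C.
Proof.
move/cvgrPdist_lt => H e e0.
have : 0 < (e%:C)%C :> C by rewrite ltcE /= eqxx.
move/H => [[A B] /= [[a _ Ha] [b _ Hb]] sub].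
exists a, b => M N hM hN; apply: (sub (M, N)); split; [exact: Ha | exact: Hb].
Qed.

Lemma join_cvg (u v : nat -> C) a b : u @ \oo --> a -> v @ \oo --> b ->
  (fun MN : nat * nat => u MN.1 + v MN.2) @ filter_prod \oo \oo --> a + b.
Proof.
move=> hu hv; apply: cvgD.
  exact: (cvg_comp _ _ cvg_fst hu).
exact: (cvg_comp _ _ cvg_snd hv).
Qed.

Lemma split_cvg (u v : nat -> C) l :
  (fun MN : nat * nat => u MN.1 + v MN.2) @ filter_prod \oo \oo --> l ->
  [/\ cvgn u, cvgn v & l = limn u + limn v].
Proof.
move=> hl; have H := prod_eps _ _ hl.
have e2 : forall e : R, 0 < e -> 0 < e / 2 by move=> e e0; rewrite divr_gt0.
have cu : cvgn u.
  apply: C_complete => e e0; have [M0 [N0 HMN]] := H _ (e2 _ e0).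
  exists M0 => M hM.
  have h1 := HMN M0 N0 (leqnn _) (leqnn _); have h2 := HMN M N0 hM (leqnn _).
  rewrite /= in h1 h2.
  rewrite (_ : u M0 - u M = (l - (u M + v N0)) - (l - (u M0 + v N0))); last by ring.
  apply: le_lt_trans (ler_normB _ _) _.
  by rewrite (splitr e) -addC_real ltrD.
have cv : cvgn v.
  apply: C_complete => e e0; have [M0 [N0 HMN]] := H _ (e2 _ e0).
  exists N0 => N hN.
  have h1 := HMN M0 N0 (leqnn _) (leqnn _); have h2 := HMN M0 N (leqnn _) hN.
  rewrite /= in h1 h2.
  rewrite (_ : v N0 - v N = (l - (u M0 + v N)) - (l - (u M0 + v N0))); last by ring.
  apply: le_lt_trans (ler_normB _ _) _.
  by rewrite (splitr e) -addC_real ltrD.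
split => //.
exact: (cvg_unique (@norm_hausdorff _ C) hl (join_cvg _ _ _ _ cu cv)).
Qed.
Lemma tel (f : nat -> C) n : \sum_(0 <= k < n) (f k - f k.+1) = f 0%N - f n.
Proof.
elim: n => [|n IH]; first by rewrite big_geq // subrr.
by rewrite big_nat_recr //= IH addrA subrK.
Qed.

Lemma bpsum_split (a : int -> C) M N :
  bpsum a M N = \sum_(0 <= k < M) a (- (k.+1)%:Z) + \sum_(0 <= k < N.+1) a k%:Z.
Proof.
rewrite /bpsum (@big_cat_nat _ _ _ M) //; last by lia.
congr (_ + _).
  rewrite big_nat_rev /= add0n; apply: eq_big_nat => k /andP[_ hk].
  by congr a; rewrite -(subzn hk) addrAC subrr add0r.
rewrite -{1}(add0n M) big_addn.
have -> : ((M + N).+1 - M = N.+1)%N by lia.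
apply: eq_big_nat => k _; congr a; rewrite PoszD; lia.
Qed.
Lemma shiftneg (f : nat -> C) :
  (cvgn (fun N => - f N.+1) <-> cvgn f) /\
  (cvgn f -> limn (fun N => - f N.+1) = - limn f).
Proof.
have h1 : cvgn f -> (fun N => - f N.+1) @ \oo --> - limn f.
  move=> cf; apply: cvgN; by rewrite (cvg_shiftS f).
split; last by move=> cf; exact: (cvg_lim (@norm_hausdorff _ C) (h1 cf)).
split; last by move=> cf; apply/cvg_ex; exists (- limn f); exact: h1.
move=> cg; apply/cvg_ex; exists (- limn (fun N => - f N.+1)).
rewrite -(cvg_shiftS f).
have -> : (fun n => f n.+1) = (fun n => - (- f n.+1)) by apply: funext => n; rewrite opprK.
exact: cvgN.
Qed.
End Top.

Section Main.
Variables (R : realType) (d : nat) (A : 'M[R]_d).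
Hypothesis hA : A \in unitmx.
Local Notation C := (Cpx R).

Lemma mx_nz (B : 'M[R]_d) (x : 'cV[R]_d) : B \in unitmx -> x != 0 -> B *m x != 0.
Proof. move=> hB; apply: contra => /eqP h; by rewrite -(mulKmx hB x) h mulmx0. Qed.

Lemma iter_nz (B : 'M[R]_d) (x : 'cV[R]_d) n :
  B \in unitmx -> x != 0 -> iter n (mulmx B) x != 0.
Proof. move=> hB hx; elim: n => //= n IH; exact: mx_nz. Qed.

Lemma mxz_neg (x : 'cV[R]_d) n : mxzact A (- n%:Z) x = iter n (mulmx (invmx A)) x.
Proof. by case: n. Qed.

Lemma A_w (x : 'cV[R]_d) n :
  A *m iter n.+1 (mulmx (invmx A)) x = iter n (mulmx (invmx A)) x.
Proof. by rewrite iterS mulKVmx. Qed.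

Lemma bpsum_phi (g phi : 'cV[R]_d -> C) (x : 'cV[R]_d) :
  (forall y, y != 0 -> g y = phi y - phi (A *m y)) -> x != 0 ->
  (fun MN : nat * nat => bpsum (fun j : int => g (mxzact A j x)) MN.1 MN.2) =
  (fun MN => phi (mxzact A (- MN.1%:Z) x) + - phi (mxzact A (MN.2.+1)%:Z x)).
Proof.
move=> hg hx; apply: funext => -[M N] /=; rewrite bpsum_split.
have e1 : \sum_(0 <= k < M) g (mxzact A (- (k.+1)%:Z) x) =
  \sum_(0 <= k < M) ((- phi (iter k (mulmx (invmx A)) x)) -
                     (- phi (iter k.+1 (mulmx (invmx A)) x))).
  apply: eq_big_nat => k _; rewrite mxz_neg hg ?A_w; first by rewrite opprK addrC.
  by apply: iter_nz => //; rewrite unitmx_inv.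
have e2 : \sum_(0 <= k < N.+1) g (mxzact A k%:Z x) =
  \sum_(0 <= k < N.+1) (phi (iter k (mulmx A) x) - phi (iter k.+1 (mulmx A) x)).
  by apply: eq_big_nat => k _; rewrite /= hg ?iter_nz.
rewrite e1 e2 !tel mxz_neg /=.
by ring.
Qed.

End Main.

Theorem theorem2p1 (R : realType) (d : nat) (g : 'cV[R]_d -> Cpx R)
  (A : 'M[R]_d) (hA : A \in unitmx) :
  (* (i) *)
  ((forall gamma : 'cV[R]_d, gamma != 0 ->
      bseries_cvg (fun j : int => g (mxzact A j gamma))) ->
   exists phi : 'cV[R]_d -> Cpx R,
     forall gamma : 'cV[R]_d, gamma != 0 -> g gamma = phi gamma - phi (A *m gamma))
  /\
  (* (ii) *)
  (forall phi : 'cV[R]_d -> Cpx R,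
     (forall gamma : 'cV[R]_d, gamma != 0 -> g gamma = phi gamma - phi (A *m gamma)) ->
     forall gamma : 'cV[R]_d, gamma != 0 ->
       (bseries_cvg (fun j : int => g (mxzact A j gamma)) <->
        (cvgn (fun N : nat => phi (mxzact A N%:Z gamma)) /\
         cvgn (fun N : nat => phi (mxzact A (- N%:Z) gamma)))))
  /\
  (* (iii) *)
  (forall phi : 'cV[R]_d -> Cpx R,
     (forall gamma : 'cV[R]_d, gamma != 0 -> g gamma = phi gamma - phi (A *m gamma)) ->
     ((forall gamma : 'cV[R]_d, gamma != 0 ->
         bseries_cvg_to (fun j : int => g (mxzact A j gamma)) 1) <->
      (forall gamma : 'cV[R]_d, gamma != 0 ->
         cvgn (fun N : nat => phi (mxzact A N%:Z gamma)) /\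
         cvgn (fun N : nat => phi (mxzact A (- N%:Z) gamma)) /\
         limn (fun N : nat => phi (mxzact A (- N%:Z) gamma))
           - limn (fun N : nat => phi (mxzact A N%:Z gamma)) = 1))).
Proof.
split.
  move=> H.
  pose Q x N := \sum_(0 <= k < N.+1) g (iter k (mulmx A) x).
  have cQ : forall x, x != 0 -> cvgn (Q x).
    move=> x hx; have [l hl] := H x hx; move: hl; rewrite /bseries_cvg_to.
    have -> : (fun MN : nat * nat => bpsum (fun j : int => g (mxzact A j x)) MN.1 MN.2) =
       (fun MN => \sum_(0 <= k < MN.1) g (mxzact A (- (k.+1)%:Z) x) + Q x MN.2).
      by apply: funext => -[M N]; rewrite bpsum_split.
    by move=> /(@split_cvg R (fun M => \sum_(0 <= k < M) g (mxzact A (- (k.+1)%:Z) x)) (Q x) l) [].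
  exists (fun x => limn (Q x)) => x hx.
  have hAx : A *m x != 0 by exact: mx_nz.
  have eQ : forall N, Q x N.+1 = g x + Q (A *m x) N.
    move=> N; rewrite /Q big_nat_recl //; congr (_ + _).
    by apply: eq_big_nat => k _; rewrite iterSr.
  have h : (fun N => Q x N.+1) @ \oo --> g x + limn (Q (A *m x)).
    have -> : (fun N => Q x N.+1) = (fun N => g x + Q (A *m x) N).
      by apply: funext => N; rewrite eQ.
    apply: cvgD; [exact: cvg_cst | exact: cQ].
  have h' : Q x @ \oo --> g x + limn (Q (A *m x)) by rewrite -(cvg_shiftS (Q x)).
  by rewrite (cvg_lim (@norm_hausdorff _ (Cpx R)) h') addrK.
split.
  move=> phi hphi x hx.
  rewrite /bseries_cvg /bseries_cvg_to (@bpsum_phi _ _ _ hA _ _ _ hphi hx).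
  have [sh1 _] := @shiftneg R (fun N => phi (mxzact A N%:Z x)).
  split.
    case=> l /(@split_cvg R (fun M : nat => phi (mxzact A (- M%:Z) x)) (fun N : nat => - phi (mxzact A (N.+1)%:Z x)) l) [cu cv _].
    split; last exact: cu.
    exact: (iffLR sh1 cv).
  case=> c1 c2; eexists; apply: (@join_cvg R (fun M : nat => phi (mxzact A (- M%:Z) x)) (fun N : nat => - phi (mxzact A (N.+1)%:Z x))); first exact: c2.
  exact/sh1.
move=> phi hphi; split.
  move=> H x hx; have := H x hx.
  rewrite /bseries_cvg_to (@bpsum_phi _ _ _ hA _ _ _ hphi hx) => /(@split_cvg R (fun M : nat => phi (mxzact A (- M%:Z) x)) (fun N : nat => - phi (mxzact A (N.+1)%:Z x)) 1) [cu cv e].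
  have [sh1 sh2] := @shiftneg R (fun N => phi (mxzact A N%:Z x)).
  have c1 := iffLR sh1 cv.
  split; first exact: c1.
  split; first exact: cu.
  by rewrite e (sh2 c1).
move=> H x hx; have [c1 [c2 e]] := H x hx.
have [sh1 sh2] := @shiftneg R (fun N => phi (mxzact A N%:Z x)).
rewrite /bseries_cvg_to (@bpsum_phi _ _ _ hA _ _ _ hphi hx) -e -(sh2 c1).
apply: (@join_cvg R (fun M : nat => phi (mxzact A (- M%:Z) x)) (fun N : nat => - phi (mxzact A (N.+1)%:Z x))); first exact: c2.
exact: (iffRL sh1 c1).
Qed.
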